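(* For a dataset $V$ of size $n$, any real $p\in(0,+\infty)$ and any dimension $d\ge1$, the VC dimension of contrastive learning (on triplet queries) for the $\ell_p$-distance class in dimension $d$ is $\Omega(\min(n^2,nd))$.
   Context: $V$ is a finite set with $|V|=n$. A query is a triple $(x,y,z)$ of elements of $V$; a labeling assigns it either $(x,y^+,z^-)$ (requiring $\rho(x,y)<\rho(x,z)$) or $(x,z^+,y^-)$ (requiring $\rho(x,y)>\rho(x,z)$). The $\ell_p$-distance class in dimension $d$ consists of all $\rho(x,y)=\|f(x)-f(y)\|_p$, $f:V\to\mathbb R^d$, where $\|v\|_p=(\sum_i|v_i|^p)^{1/p}$. A set $S$ of queries is shattered if for every labeling of $S$ there is a distance in the class satisfying all labeled queries; the VC dimension is the maximum size of a shattered set. *)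

(* Defs.v *)
From HB Require Import structures.
From mathcomp Require Import all_boot all_order all_algebra.
From mathcomp Require Import all_classical all_reals all_analysis.
From mathcomp Require Import Rstruct Rstruct_topology.
From Stdlib Require Rdefinitions.
Notation R := Rdefinitions.R.
Set Implicit Arguments. Unset Strict Implicit. Unset Printing Implicit Defensive.
Import Order.TTheory GRing.Theory Num.Theory.
Local Open Scope ring_scope.

Definition lp_dist (n d : nat) (p : R) (f : 'I_n -> 'rV[R]_d) (x y : 'I_n) : R :=
  (\sum_(i < d) `|f x 0 i - f y 0 i| `^ p) `^ p^-1.

(* A query is a triple (x,y,z).  A labeling assigns to each query a boolean:
   true  means (x, y^+, z^-) : rho(x,y) < rho(x,z);
   false means (x, z^+, y^-) : rho(x,y) > rho(x,z). *)
Definition query (n : nat) := ('I_n * 'I_n * 'I_n)%type.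

Definition satisfies (n : nat) (rho : 'I_n -> 'I_n -> R) (q : query n) (b : bool) : Prop :=
  let: (x, y, z) := q in
  if b then rho x y < rho x z else rho x y > rho x z.

Definition lp_shattered (n d : nat) (p : R) (S : {set query n}) : Prop :=
  forall lab : query n -> bool,
    exists f : 'I_n -> 'rV[R]_d,
      forall q, q \in S -> satisfies (lp_dist p f) q (lab q).

Definition lp_vcdim (n d : nat) (p : R) : nat :=
  \max_(S : {set query n} | `[< lp_shattered d p S >]) #|S|.

(* Main.v *)
Require Import Defs.
From HB Require Import structures.
From mathcomp Require Import all_boot all_order all_algebra.
From mathcomp Require Import all_classical all_reals all_analysis.
From mathcomp Require Import Rstruct Rstruct_topology.
From Stdlib Require Rdefinitions.
From mathcomp Require Import zify ring lra.
Import Order.TTheory GRing.Theory Num.Theory.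
Set Implicit Arguments.
Local Open Scope ring_scope.

Definition Fc (n' : nat) (lab : query n'.+1 -> bool) (m v i : nat) : R :=
  if (v < m)%N then (if i == v then 3 else if (i < m)%N then 1 else 0)
  else if (v < m + m)%N then (if i == (v - m)%N then 1 else 0)
  else (if (i < m)%N && lab (inord i, inord v, inord (m + i)%N) then 2 else 0).

Definition fc (n' d : nat) (lab : query n'.+1 -> bool) (m : nat) (v : 'I_n'.+1) : 'rV[R]_d :=
  \row_(i < d) Fc lab m v i.

Definition qm (n' m : nat) (j k : nat) : query n'.+1 :=
  (inord j, inord (m + m + k)%N, inord (m + j)%N).

Lemma n12 : `|1 - 2 : R| = 1.
Proof. rewrite ler0_norm; lra. Qed.
Lemma n32 : `|3 - 2 : R| = 1.
Proof. rewrite ger0_norm; lra. Qed.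
Lemma n31 : `|3 - 1 : R| = 2.
Proof. rewrite ger0_norm; lra. Qed.
Lemma n30 : `|3 - 0 : R| = 3.
Proof. rewrite ger0_norm; lra. Qed.

Lemma powlt (p a b : R) : 0 < p -> 0 <= a -> a < b -> a `^ p < b `^ p.
Proof.
move=> hp ha hab; apply: (gt0_ltr_powR hp) => //; rewrite nnegrE //.
exact: (le_trans ha (ltW hab)).
Qed.

Lemma sum_cmp (d : nat) (p : R) (a b c : 'I_d -> R) (j0 : 'I_d) : 0 < p ->
  (forall i, i != j0 -> `|a i - b i| = `|a i - c i|) ->
  `|a j0 - b j0| < `|a j0 - c j0| ->
  (\sum_(i < d) `|a i - b i| `^ p) `^ p^-1 < (\sum_(i < d) `|a i - c i| `^ p) `^ p^-1.
Proof.
move=> hp heq hlt.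
have hpi : 0 < p^-1 by rewrite invr_gt0.
apply: powlt => //; first by apply: sumr_ge0 => i _; exact: powR_ge0.
rewrite (bigD1 j0) //= [X in _ < X](bigD1 j0) //=.
rewrite (eq_bigr (fun i => `|a i - c i| `^ p)); last by move=> i hi; rewrite heq.
rewrite ltrD2r.
by apply: powlt.
Qed.

Lemma key (n' d : nat) (p : R) (lab : query n'.+1 -> bool) (m j k : nat) :
  0 < p -> (m <= d)%N -> (j < m)%N -> (m + m + k < n'.+1)%N ->
  satisfies (lp_dist p (fc d lab m)) (qm n' m j k) (lab (qm n' m j k)).
Proof.
move=> hp hmd hjm hk.
have hj : (j < n'.+1)%N by lia.
have hmj : (m + j < n'.+1)%N by lia.
have hjd : (j < d)%N by lia.
pose j0 : 'I_d := Ordinal hjd.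
rewrite /satisfies /qm /lp_dist.
have fx : forall i : 'I_d, fc d lab m (inord j) 0 i = if val i == j then 3 else if (val i < m)%N then 1 else 0.
  move=> i; rewrite /fc mxE /Fc inordK // hjm //.
have fz : forall i : 'I_d, fc d lab m (inord (m + j)) 0 i = if val i == j then 1 else 0.
  move=> i; rewrite /fc mxE /Fc inordK //.
  have -> : (m + j < m)%N = false by lia.
  have -> : (m + j < m + m)%N = true by lia.
  by rewrite addKn.
have fy : forall i : 'I_d, fc d lab m (inord (m + m + k)) 0 i =
    if (val i < m)%N && lab (inord i, inord (m + m + k), inord (m + i)%N) then 2 else 0.
  move=> i; rewrite /fc mxE /Fc inordK //.
  have -> : (m + m + k < m)%N = false by lia.
  by have -> : (m + m + k < m + m)%N = false by lia.
have eqAB : forall i : 'I_d, i != j0 ->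
   `|fc d lab m (inord j) 0 i - fc d lab m (inord (m + m + k)) 0 i| =
   `|fc d lab m (inord j) 0 i - fc d lab m (inord (m + j)) 0 i|.
  move=> i hi; rewrite fx fy fz.
  have -> : (val i == j) = false.
    by apply/negbTE; apply: contra hi => /eqP h; apply/eqP/val_inj.
  case: ifP => him /=.
    case: ifP => _; rewrite ?subr0 ?normr1 //.
    exact: n12.
  by rewrite subrr.
have Aj : `|fc d lab m (inord j) 0 j0 - fc d lab m (inord (m + m + k)) 0 j0| =
     (if lab (inord j, inord (m + m + k), inord (m + j)) then 1 else 3).
  rewrite fx fy /= eqxx hjm /=.
  case: ifP => _.
    exact: n32.
  exact: n30.
have Bj : `|fc d lab m (inord j) 0 j0 - fc d lab m (inord (m + j)) 0 j0| = 2.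
  rewrite fx fz /= eqxx.
  exact: n31.
case: ifP Aj => hl Aj.
  have H : `|fc d lab m (inord j) 0 j0 - fc d lab m (inord (m + m + k)) 0 j0| <
    `|fc d lab m (inord j) 0 j0 - fc d lab m (inord (m + j)) 0 j0| by rewrite Aj Bj; lra.
  apply: (@sum_cmp _ _ _ _ _ j0) => //; solve [exact: H | exact: eqAB].
have H : `|fc d lab m (inord j) 0 j0 - fc d lab m (inord (m + j)) 0 j0| <
    `|fc d lab m (inord j) 0 j0 - fc d lab m (inord (m + m + k)) 0 j0| by rewrite Aj Bj; lra.
apply: (@sum_cmp _ _ _ _ _ j0) => //; solve [exact: H | by move=> i hi; rewrite eqAB].
Qed.
Section Arith.
Local Open Scope nat_scope.
Lemma arith (n d : nat) : (8 <= n)%N ->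
  (minn (n ^ 2) (n * d) <= 32 * (minn d (n %/ 4) * (n %/ 2)))%N.
Proof.
move=> hn.
have h4 : (n <= 4 * (n %/ 4) + 3)%N by lia.
have h2 : (n <= 2 * (n %/ 2) + 1)%N by lia.
move: (n %/ 4) (n %/ 2) h4 h2 => a b h4 h2.
case: (leqP d a) => hd.
  have : (n * d <= 32 * (d * b))%N by nia.
  lia.
have : (n ^ 2 <= 32 * (a * b))%N by rewrite expnS expn1; nia.
lia.
Qed.
End Arith.


Lemma shatter (n' d m b : nat) (p : R) : 0 < p -> (m <= d)%N -> (m + m + b <= n'.+1)%N ->
  exists S : {set query n'.+1}, lp_shattered d p S /\ #|S| = (m * b)%N.
Proof.
move=> hp hmd hb.
exists [set qm n' m (val jk.1) (val jk.2) | jk : 'I_m * 'I_b]; split.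
  move=> lab; exists (fc d lab m) => q /imsetP [[j k] _ ->] /=.
  move: (ltn_ord j) (ltn_ord k) => ? ?.
  apply: key => //; lia.
rewrite card_imset; first by rewrite card_prod !card_ord.
move=> [j k] [j' k'] /= [] e1 e2 _.
move: (ltn_ord j) (ltn_ord k) (ltn_ord j') (ltn_ord k') => ? ? ? ?.
have hj : (j < n'.+1)%N by lia.
have hj' : (j' < n'.+1)%N by lia.
have hk : (m + m + k < n'.+1)%N by lia.
have hk' : (m + m + k' < n'.+1)%N by lia.
have := congr1 (@nat_of_ord _) e1; rewrite !inordK // => ej.
have := congr1 (@nat_of_ord _) e2; rewrite !inordK // => ek.
congr (_, _); apply: val_inj => /=; lia.
Qed.

Theorem mainTheorem4 :
  exists c : R, 0 < c /\
  exists N : nat, forall n d : nat, (N <= n)%N -> (1 <= d)%N ->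
    forall p : R, 0 < p ->
      c * (minn (n ^ 2) (n * d))%:R <= (lp_vcdim n d p)%:R.
Proof.
exists (1 / 32); split; first lra.
exists 8%N => n d hn hd p hp.
case: n hn => [|n'] hn; first by [].
have hmd : (minn d (n'.+1 %/ 4) <= d)%N by lia.
have hb : (minn d (n'.+1 %/ 4) + minn d (n'.+1 %/ 4) + n'.+1 %/ 2 <= n'.+1)%N by lia.
have [S [hS cS]] := @shatter n' d _ _ p hp hmd hb.
have hv : (#|S| <= lp_vcdim n'.+1 d p)%N.
  rewrite /lp_vcdim; apply: (leq_bigmax_cond S); exact: asboolT.
have ha := @arith _ d hn.
rewrite -cS in ha.
have h1 : ((minn (n'.+1 ^ 2) (n'.+1 * d))%:R <= (32 * #|S|)%:R :> R) by rewrite ler_nat.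
have h2 : ((#|S|)%:R <= (lp_vcdim n'.+1 d p)%:R :> R) by rewrite ler_nat.
rewrite natrM in h1.
lra.
Qed.
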